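(* Let $(S,\circ)$ be a right loop and let $L$ be the congruence on $S$ generated by $\{(x,\,x\theta^S f^S(y,z)) : x,y,z\in S\}\cup\{(x\circ y,\,y\circ x): x,y\in S\}$. Then $L$ is the smallest congruence on $S$ such that the quotient right loop $S/L$ is an abelian group.
   Context: A right loop is a set $S$ with a binary operation $\circ$ and an element $1$ such that $1\circ x=x\circ 1=x$ for all $x$, and for all $a,b\in S$ the equation $X\circ a=b$ has a unique solution in $S$. A congruence on $S$ is an equivalence relation on $S$ which is a right subloop of $S\times S$ (componentwise operation); for a congruence $R$ with class $T=R_1$ of $1$, the classes are $T\circ x$ and $S/R=\{T\circ x\}$ is a right loop with $(T\circ x)\circ(T\circ y)=T\circ(x\circ y)$. For $y,z\in S$, $f^S(y,z):S\to S$ sends $x$ to the unique $X\in S$ with $X\circ(y\circ z)=(x\circ y)\circ z$. $G_S$ is the subgroup of $\mathrm{Sym}(S)$ generated by all $f^S(y,z)$, and $x\theta^S h:=h(x)$ for $h\in G_S$. *)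

(* Defs.v *)
From Stdlib Require Import Classical.

Section RightLoops.
Variables (S : Type) (op : S -> S -> S) (one : S).

Definition right_loop : Prop :=
  (forall x, op one x = x) /\ (forall x, op x one = x) /\
  (forall a b, exists! X, op X a = b).

(* A congruence: an equivalence relation that is a right subloop of S x S
   (componentwise operation): contains (1,1), closed under the operation,
   and closed under the unique solution of (X,X') o (a,a') = (b,b'). *)
Definition congruence (R : S -> S -> Prop) : Prop :=
  (forall x, R x x) /\
  (forall x y, R x y -> R y x) /\
  (forall x y z, R x y -> R y z -> R x z) /\
  R one one /\
  (forall a a' b b', R a a' -> R b b' -> R (op a b) (op a' b')) /\
  (forall a a' b b' X X', R a a' -> R b b' ->
      op X a = b -> op X' a' = b' -> R X X').

(* The quotient right loop S/R, with classes T o x and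
   (T o x) o (T o y) = T o (x o y), is an abelian group.  Equality of the
   classes of u and v is R u v; the identity class is that of one. *)
Definition quotient_abelian_group (R : S -> S -> Prop) : Prop :=
  (forall x y z, R (op (op x y) z) (op x (op y z))) /\
  (forall x, R (op one x) x /\ R (op x one) x) /\
  (forall x, exists y, R (op y x) one /\ R (op x y) one) /\
  (forall x y, R (op x y) (op y x)).

(* The congruence L generated by the pairs (x, x theta f^S(y,z)), where
   x theta f^S(y,z) is the unique X with X o (y o z) = (x o y) o z,
   together with the pairs (x o y, y o x). *)
Definition gen_congruence_L (a b : S) : Prop :=
  forall R : S -> S -> Prop, congruence R ->
    (forall x y z X, op X (op y z) = op (op x y) z -> R x X) ->
    (forall x y, R (op x y) (op y x)) ->
    R a b.

End RightLoops.
Arguments right_loop {S}.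
Arguments congruence {S}.
Arguments quotient_abelian_group {S}.
Arguments gen_congruence_L {S}.

(* Main.v *)
Require Import Defs.

Theorem mainTheorem6 (S : Type) (op : S -> S -> S) (one : S)
  (HS : right_loop op one) :
  congruence op one (gen_congruence_L op one) /\
  quotient_abelian_group op one (gen_congruence_L op one) /\
  (forall R : S -> S -> Prop, congruence op one R ->
     quotient_abelian_group op one R ->
     forall a b, gen_congruence_L op one a b -> R a b).
Proof.
  destruct HS as [H1l [H1r Hdiv]].
  assert (HC : congruence op one (gen_congruence_L op one)).
  { unfold gen_congruence_L; repeat split.
    - intros x R [Rr _] _ _; apply Rr.
    - intros x y H R HR G1 G2; pose proof HR as HR';
      destruct HR' as [_ [Rs _]]; apply Rs, H; auto.
    - intros x y z H H' R HR G1 G2; pose proof HR as HR';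
      destruct HR' as [_ [_ [Rt _]]]; apply Rt with y; [apply H|apply H']; auto.
    - intros R [_ [_ [_ [R1 _]]]] _ _; exact R1.
    - intros a a' b b' Ha Hb R HR G1 G2; pose proof HR as HR';
      destruct HR' as [_ [_ [_ [_ [Rm _]]]]]; apply Rm; [apply Ha|apply Hb]; auto.
    - intros a a' b b' X X' Ha Hb E E' R HR G1 G2; pose proof HR as HR';
      destruct HR' as [_ [_ [_ [_ [_ Rd]]]]]; eapply Rd;
      [apply Ha|apply Hb| exact E | exact E']; auto. }
  assert (Gen1 : forall x y z X, op X (op y z) = op (op x y) z ->
                   gen_congruence_L op one x X).
  { intros x y z X E R _ G1 _; eapply G1; exact E. }
  assert (Gen2 : forall x y, gen_congruence_L op one (op x y) (op y x)).
  { intros x y R _ _ G2; apply G2. }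
  destruct HC as [Lr [Ls [Lt [L1 [Lm Ld]]]]].
  split; [repeat split; auto|split].
  - repeat split.
    + intros x y z.
      destruct (Hdiv (op y z) (op (op x y) z)) as [X [EX _]].
      pose proof (Gen1 _ _ _ _ EX) as HX.
      rewrite <- EX. apply Lm; [apply Ls, HX | apply Lr].
    + rewrite H1l; apply Lr.
    + rewrite H1r; apply Lr.
    + intros x. destruct (Hdiv x one) as [y [Ey _]]. exists y.
      split; [rewrite Ey; apply Lr|]. eapply Lt; [apply Gen2|rewrite Ey; apply Lr].
    + intros x y; apply Gen2.
  - intros R HR HQ a b H. apply H; auto.
    intros x y z X E.
    destruct HR as [Rr [Rs [Rt [R1 [Rm Rd]]]]].
    destruct HQ as [Ra _].
    eapply Rd with (a := op y z) (a' := op y z) (b := op x (op y z)) (b' := op X (op y z));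
      [apply Rr | | reflexivity | reflexivity].
    rewrite E. apply Rs, Ra.
    apply HQ.
Qed.
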